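(* Let $\kappa$ be an infinite cardinal and let $x$ be a regular ultrafilter on $\kappa$. Assume $Y$ is a compact Hausdorff space with $w(Y)\le\kappa$, $F\subseteq Y$ has empty interior, and $y\in F$. Then there is a map $g:\kappa\to Y$ such that: (A) $\beta g$ maps $\beta\kappa$ onto $Y$; (B) $(\beta g)(x) = y$; (C) $g(\xi)\notin F$ for all $\xi<\kappa$; (D) $(\beta g)^{-1}(F)$ is nowhere dense in $\beta\kappa$.
   Context: $\beta\kappa$ is the Čech–Stone compactification of the discrete space $\kappa$, i.e. the space of ultrafilters on $\kappa$ with principal ultrafilters identified with points of $\kappa$. For $g:\kappa\to Y$ with $Y$ compact Hausdorff, $\beta g:\beta\kappa\to Y$ is the unique continuous extension of $g$. An ultrafilter $x$ on $\kappa$ is regular if there are sets $E_\alpha\in x$ ($\alpha<\kappa$) such that for every $\xi<\kappa$ the set $\{\alpha<\kappa : \xi\in E_\alpha\}$ is finite. $w(Y)$ is the weight of $Y$. *)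

(* Defs.v *)
From HB Require Import structures.
From mathcomp Require Import all_boot all_order all_algebra.
From mathcomp Require Import all_classical topology.
Local Open Scope card_scope.
Set Implicit Arguments. Unset Strict Implicit. Unset Printing Implicit Defensive.
Local Open Scope classical_set_scope.

(* beta K : the Cech-Stone compactification of the discrete space K,
   realized as the space of ultrafilters on K. *)
Record beta (K : Type) := Beta { uf : set_system K ; uf_ultra : UltraFilter uf }.

Definition beta_hat (K : Type) (A : set K) : set (beta K) := [set u | uf u A].

Definition beta_open (K : Type) (S : set (beta K)) :=
  forall u, S u -> exists2 A : set K, uf u A & beta_hat A `<=` S.

Definition beta_closure (K : Type) (S : set (beta K)) : set (beta K) :=
  [set u | forall U, beta_open U -> U u -> U `&` S !=set0].

Definition beta_interior (K : Type) (S : set (beta K)) : set (beta K) :=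
  [set u | exists U, [/\ beta_open U, U u & U `<=` S]].

Definition beta_nowhere_dense (K : Type) (S : set (beta K)) :=
  beta_interior (beta_closure S) = set0.

(* graph of the continuous extension  beta g : beta K -> Y  :
   (beta g)(u) = p  iff  g(u) converges to p  (unique since Y is
   compact Hausdorff). *)
Definition betaext (K : Type) (Y : topologicalType) (g : K -> Y)
  (u : beta K) (p : Y) : Prop := g @ uf u --> p.

Definition regular_ultra (K : Type) (x : set_system K) :=
  exists E : K -> set K, (forall a, x (E a)) /\
     (forall xi, finite_set [set a | E a xi]).

Definition weight_le (Y : topologicalType) (K : Type) :=
  exists2 B : set (set Y), B #<= [set: K] & basis B.

(* Main.v *)
Require Import Defs.
From HB Require Import structures.
From mathcomp Require Import all_boot all_order all_algebra.
From mathcomp Require Import all_classical topology.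
Local Open Scope classical_set_scope.
From mathcomp Require Import zify.
Local Open Scope card_scope.
Set Implicit Arguments. Unset Strict Implicit. Unset Printing Implicit Defensive.

Definition PG (T : Type) (A : set ((T * bool) * T)) :=
  [/\ (forall p p' s, A (p, s) -> A (p', s) -> p = p'),
      (forall t b s b', A ((t, b), s) -> exists s', A ((t, b'), s')) &
      (forall p s, A (p, s) -> exists b s', A ((s, b), s'))].

Definition domG (T : Type) (A : set ((T * bool) * T)) : set T :=
  [set t | exists b s, A ((t, b), s)].

Lemma split_max (T : Type) : exists A : set ((T * bool) * T), PG A /\ finite_set (~` domG A).
Proof.
have [|A [PA Amax]] := @Zorn_bigcup _ (@PG T).
  move=> FF FP Ftot; split.
  - move=> p p' s [X FX Xps] [X' FX' Xps'].
    have [XX'|X'X] := Ftot _ _ FX FX'.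
      by have [h _ _] := FP _ FX'; apply: (h _ _ s) => //; apply: XX'.
    by have [h _ _] := FP _ FX; apply: (h _ _ s) => //; apply: X'X.
  - move=> t b s b' [X FX Xs]; have [_ h _] := FP _ FX.
    by have [s' Xs'] := h _ _ _ b' Xs; exists s'; exists X.
  - move=> p s [X FX Xs]; have [_ _ h] := FP _ FX.
    by have [b [s' Xs']] := h _ _ Xs; exists b, s'; exists X.
exists A; split => //; apply: contrapT => infD.
elim/Ppointed: T A PA Amax infD => T A PA Amax infD.
  by apply: infD; rewrite emptyE; exact: finite_set0.
have /infiniteP/pcard_leP[e] := infD.
have einj : injective e.
  by move=> i j; apply: (@inj _ _ _ e); rewrite inE.
have edom : forall n, ~ domG A (e n).
  by move=> n; exact: (@funS _ _ _ _ e n I).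
pose N : set ((T * bool) * T) :=
  [set q | exists n, q.1.1 = e n /\ q.2 = e (2 * n + nat_of_bool q.1.2)%N].
have [Ainj Atot Arng] := PA.
apply: (Amax (A `|` N)).
  split; first by move=> q Aq; left.
  move=> AN; apply: (edom 0%N); have : (A `|` N) ((e 0%N, false), e 0%N).
    by right; exists 0%N.
  by move=> /AN Ae; exists false, (e 0%N).
split.
- move=> [t b] [t' b'] s.
  move=> [As|[n /= [tn sn]]] [As'|[n' /= [tn' sn']]].
  + exact: Ainj As As'.
  + have [b0 [s1 Hs1]] := Arng _ _ As.
    by exfalso; apply: (edom (2 * n' + b')%N); rewrite -sn'; exists b0, s1.
  + have [b0 [s1 Hs1]] := Arng _ _ As'.
    by exfalso; apply: (edom (2 * n + b)%N); rewrite -sn; exists b0, s1.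
  + rewrite sn in sn'; have := einj _ _ sn' => h.
    have hb : b = b' /\ n = n'.
      by destruct b, b'; simpl in h; split; (lia || congruence).
    by case: hb => -> hn; rewrite tn tn' hn.
- move=> t b s b' [As|[n /= [tn sn]]].
    by have [s' As'] := Atot _ _ _ b' As; exists s'; left.
  by exists (e (2 * n + b')%N); right; exists n.
- move=> [t b] s [As|[n /= [tn sn]]].
    by have [b0 [s1 As1]] := Arng _ _ As; exists b0, s1; left.
  exists false, (e (2 * (2 * n + b))%N); right; exists (2 * n + b)%N => /=.
  by rewrite sn addn0.
Qed.

Lemma split_uf (T : Type) (x : set_system T) : UltraFilter x ->
  (forall R, finite_set R -> ~ x R) ->
  exists (D : set T) (h : T -> T), ~ x D /\ forall t, exists2 d, D d & h d = t.
Proof.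
move=> xU xfin.
have [A [[Ainj Atot Arng] finR]] := split_max T.
pose Db (b : bool) := [set s | exists t, A ((t, b), s)] `|` ~` domG A.
have hb : forall b, exists h : T -> T, forall t, exists2 d, Db b d & h d = t.
  move=> b.
  have /choice[h hP] : forall s, exists t : T,
      (exists t', A ((t', b), s)) -> A ((t, b), s).
    move=> s; have [[t' At']|nA] := pselect (exists t', A ((t', b), s)).
      by exists t'.
    by exists s.
  exists (fun s => if pselect (exists t', A ((t', b), s)) then h s else s).
  move=> t; have [Dt|nDt] := pselect (domG A t).
    case: Dt => b0 [s0 As0]; have [s As] := Atot _ _ _ b As0.
    exists s; first by left; exists t.
    case: pselect => [ex|[]]; last by exists t.
    by have := Ainj _ _ _ (hP s ex) As => -[].
  exists t; first by right.
  case: pselect => // -[t' At']; exfalso; apply: nDt.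
  by have [b1 [s1 As1]] := Arng _ _ At'; exists b1, s1.
have [xT|nxT] := pselect (x (Db true)); last first.
  by have [h hP] := hb true; exists (Db true), h.
have [xF|nxF] := pselect (x (Db false)); last first.
  by have [h hP] := hb false; exists (Db false), h.
exfalso; apply: (xfin _ finR); apply: filterS (filterI xT xF).
move=> s [[[t At]|//] [[t' At']|//]] Ds.
by have := Ainj _ _ _ At At'.
Qed.

Lemma filter_finI (I T : Type) (S : set I) (f : I -> set T) (G : set_system T) :
  Filter G -> finite_set S -> (forall i, S i -> G (f i)) ->
  G [set v | forall i, S i -> f i v].
Proof.
elim/Pchoice: I => I in S f *.
move=> FG Sfin Hf.
apply: filterS (@filter_bigI T I (fset_set S) f G FG _).
  by move=> v Hv i Si; apply: Hv; rewrite /= in_fset_set // inE.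
by move=> i; rewrite in_fset_set // inE; exact: Hf.
Qed.

Unset Implicit Arguments.
Theorem lemma7 (K : Type) (x : set_system K) (Y : topologicalType)
    (F : set Y) (y : Y) :
  infinite_set [set: K] ->
  UltraFilter x -> regular_ultra x ->
  compact [set: Y] -> hausdorff_space Y -> weight_le Y K ->
  interior F = set0 -> F y ->
  exists g : K -> Y,
    [/\ (forall p : Y, exists u : beta K, betaext g u p),
        g @ x --> y,
        (forall xi, ~ F (g xi)) &
        beta_nowhere_dense [set u : beta K | exists2 p, betaext g u p & F p]].
Proof.
move=> Kinf xU [E [xE Efin]] Ycpt Yhaus [B Bcard [Bopen Bnb]] intF Fy.
have xfin : forall R, finite_set R -> ~ x R.
  move=> R Rfin xR; apply: Kinf.
  apply: (@sub_finite_set _ _ (\bigcup_(xi in R) [set a | E a xi])).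
    move=> a _; have /filter_ex[xi [Exi Rxi]] : x (E a `&` R) by apply: filterI.
    by exists xi.
  by apply: bigcup_finite.
have [D [h [nxD hsurj]]] := split_uf xU xfin.
have xnD : x (~` D) by case: (in_ultra_setVsetC D xU).
have [bK [bKopen bKsurj]] : exists bK : K -> set Y,
    (forall k, open (bK k)) /\ (forall U, B U -> exists k, bK k = U).
  have /pcard_surjP[g0 g0s] := Bcard.
  exists (fun k => if pselect (B (g0 k)) then g0 k else setT); split.
    move=> k; destruct (pselect (B (g0 k))) as [Bk|nBk]; [exact: Bopen | exact: openT].
  move=> U BU; have [k _ gk] := g0s U BU; exists k.
  by destruct (pselect (B (g0 k))) as [Bk|[]]; [|rewrite gk].
have notF : forall (W : set Y) (p : Y), nbhs p W -> exists v, W v /\ ~ F v.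
  move=> W p Wp; apply: contrapT => nW.
  have : interior F p.
    rewrite /interior; apply: filterS Wp => v Wv; apply: contrapT => Fv.
    by apply: nW; exists v.
  by rewrite intF.
have /choice[g gP] : forall xi, exists v : Y, [/\ ~ F v,
   (D xi -> bK (h xi) !=set0 -> bK (h xi) v) &
   (~ D xi -> forall a, E a xi -> bK a y -> bK a v)].
  move=> xi; have [Dxi|nDxi] := pselect (D xi).
    have [[p bp]|n0] := pselect (bK (h xi) !=set0).
      have [v [bv Fv]] := notF _ p (open_nbhs_nbhs (conj (bKopen _) bp)).
      by exists v; split.
    have [v [_ Fv]] := notF setT y filterT.
    by exists v; split.
  have Wn : nbhs y [set v | forall a, [set a | E a xi /\ bK a y] a -> bK a v].
    apply: filter_finI.
      by apply: sub_finite_set (Efin xi) => a [].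
    by move=> a [_ bKy]; exact: open_nbhs_nbhs (conj (bKopen a) bKy).
  have [v [Wv Fv]] := notF _ y Wn.
  by exists v; split => // _ a Ea bKy; apply: Wv.
exists g; split.
- move=> p.
  pose Fp := filter_from (nbhs p) (fun N => g @^-1` N).
  have FpF : ProperFilter Fp.
    apply: filter_from_proper.
      apply: filter_from_filter; first by exists setT; apply: filterT.
      move=> N1 N2 N1p N2p; exists (N1 `&` N2); first exact: filterI.
      by [].
    move=> N Np; have [U [BU Up] UN] := Bnb p N Np.
    have [k bk] := bKsurj U BU.
    have [d Dd hd] := hsurj k.
    have [_ gd _] := gP d.
    have gdk : bK k (g d) by rewrite -hd; apply: gd => //; rewrite hd bk; exists p.
    by exists d; apply: UN; rewrite -bk.
  have [G [GU FpG]] := ultraFilterLemma FpF.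
  exists (@Beta _ G GU) => N Np /=; apply: FpG; exists N => //.
- move=> N Ny /=; have [U [BU Uy] UN] := Bnb y N Ny.
  have [a bk] := bKsurj U BU.
  have xa : x (E a `&` ~` D) by apply: filterI.
  change (x (g @^-1` N)); apply: (filterS _ xa) => xi [Exi nDxi].
  have [_ _ gc] := gP xi; apply: UN; rewrite -bk; apply: gc => //; by rewrite bk.
- by move=> xi; have [] := gP xi.
- rewrite /beta_nowhere_dense; apply/seteqP; split => // u [U [Uo Uu Ucl]].
  have uU := uf_ultra u.
  have [A uA hatA] := Uo u Uu.
  have [xi Axi] := filter_ex uA.
  pose u0 := @Beta _ _ (principal_filter_ultra xi).
  have U0 : U u0 by apply: hatA; rewrite /beta_hat /= => z ->.
  have ho : beta_open (beta_hat [set xi]) by move=> w wA; exists [set xi].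
  have h0 : beta_hat [set xi] u0 by rewrite /beta_hat /= => z.
  have [w [wxi [q gq Fq]]] := Ucl u0 U0 (beta_hat [set xi]) ho h0.
  have wU := uf_ultra w.
  have gxi : g @ uf w --> g xi.
    move=> N Nq /=; apply: filterS wxi => z ->; exact: nbhs_singleton.
  have qg : q = g xi by apply: (cvg_unique Yhaus) gq gxi.
  by have [] := gP xi; rewrite -qg.
Qed.
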